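(* Let $S$ be an instance of 3-Partition (with $n_1\ge\cdots\ge n_{3m}$) and let $w_S=\mathrm{Load}_S\,\mathrm{Dist}_S\,\mathrm{Ver}_S$ be the string defined below. Then every accepting computation $\varepsilon\,\|\,w_S\vdash^*\varepsilon\,\|\,\varepsilon$ of the queue automaton begins as $$\varepsilon\,\|\,w_S \vdash^* e_0(b^{2B}e)^m\,\|\,\mathrm{Dist}_S\,\mathrm{Ver}_S,$$ and in the subsequent part of the computation, for each $i=1,\dots,m$, the $i$-th occurrence of the subword $(a_1b^Ba_2)^3$ in $\mathrm{Dist}_S$ is consumed by the $i$-th occurrence of $b^{2B}$ in the queue.
   Context: Queue automaton: a configuration is written $Q\,\|\,x$ ($Q$ = queue contents, $x$ = remaining input); a step from $Q\,\|\,\sigma x$ ($\sigma$ a symbol) goes either to $Q\sigma\,\|\,x$ (push) or, if $Q=\sigma Q'$, to $Q'\,\|\,x$ (match/pop). $\vdash^*$ is zero or more steps; $\varepsilon$ is the empty string; an accepting computation of $w$ is a computation $\varepsilon\,\|\,w\vdash^*\varepsilon\,\|\,\varepsilon$. If a computation passes through $u_1u_2u_3\,\|\,x_1x_2x_3\vdash^* u_2u_3z_1\,\|\,x_2x_3\vdash^* u_3z_1z_2\,\|\,x_3$, then $x_2$ is consumed by $u_2$ (with resultant $z_2$). An instance of 3-Partition is a sequence $S=\langle n_i:1\le i\le 3m\rangle$ of natural numbers such that $B=(\sum_{i=1}^{3m}n_i)/m$ is an integer and $B/4<n_i<B/2$ for all $i$; throughout, the $n_i$ are assumed to be in non-increasing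 order. The alphabet is $\{a_1,a_2,b,e_0,e,c_1,c_2,x,y\}$; $u^i$ denotes $i$ concatenated copies of $u$ and $\prod_{\ell=1}^k u_\ell=u_1u_2\cdots u_k$. Define $U_\ell=a_1^2b^\ell a_2^2$, $v_\ell=c_1x^\ell y^\ell c_2$, $D_k=U_{n_k}^{3m-k+1}$, $E_k=U_B^{3m-k}\,a_1b^{n_k}a_2\,U_B^{3m-k}$, $F_k=U_B^{2(3m-k)}$, and $\mathrm{Load}_S=e_0\prod_{i=1}^m(b^{2B}e)$, $\mathrm{Dist}_S=e_0\prod_{i=1}^m((a_1b^Ba_2)^3e)$, $\mathrm{Ver}_S=\prod_{k=1}^{3m}[v_{4k-3}D_kv_{4k-3}\,v_{4k-2}D_kv_{4k-2}\,v_{4k-1}E_kv_{4k-1}\,v_{4k}F_kv_{4k}]$, and $w_S=\mathrm{Load}_S\mathrm{Dist}_S\mathrm{Ver}_S$. *)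

(* Defs.v *)
From HB Require Import structures.
From mathcomp Require Import all_boot.
Set Implicit Arguments. Unset Strict Implicit. Unset Printing Implicit Defensive.

Inductive sym := a1 | a2 | b | e0 | e | c1 | c2 | sx | sy.

Definition sym_eqb (s t : sym) : bool :=
  match s, t with
  | a1, a1 | a2, a2 | b, b | e0, e0 | e, e | c1, c1 | c2, c2 | sx, sx | sy, sy => true
  | _, _ => false
  end.
Lemma sym_eqP : Equality.axiom sym_eqb.
Proof. by case; case; constructor. Qed.
HB.instance Definition _ := hasDecEq.Build sym sym_eqP.

Definition word := seq sym.

(* A configuration Q || x : (queue contents, remaining input). *)
Definition config := (word * word)%type.

Inductive qstep : config -> config -> Prop :=
| qstep_push (Q : word) (s : sym) (w : word) : qstep (Q, s :: w) (rcons Q s, w)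
| qstep_pop  (Q : word) (s : sym) (w : word) : qstep (s :: Q, s :: w) (Q, w).

Definition computation (c : nat -> config) (k : nat) : Prop :=
  forall j, j < k -> qstep (c j) (c j.+1).

Definition accepting (w : word) (c : nat -> config) (k : nat) : Prop :=
  [/\ computation c k, c 0 = ([::], w) & c k = ([::], [::])].

Definition rep (i : nat) (u : word) : word := flatten (nseq i u).

Definition three_partition (S : seq nat) (m B : nat) : Prop :=
  [/\ 0 < m, size S = 3 * m, sumn S = m * B,
      (forall n, n \in S -> (B < 4 * n) && (2 * n < B)) &
      sorted geq S].

Section W.
Variables (S : seq nat) (m B : nat).

(* n_k, 1-indexed *)
Definition nk (k : nat) : nat := nth 0 S k.-1.

Definition U (l : nat) : word := [:: a1; a1] ++ nseq l b ++ [:: a2; a2].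
Definition v (l : nat) : word := [:: c1] ++ nseq l sx ++ nseq l sy ++ [:: c2].
Definition D (k : nat) : word := rep (3 * m - k + 1) (U (nk k)).
Definition E (k : nat) : word :=
  rep (3 * m - k) (U B) ++ [:: a1] ++ nseq (nk k) b ++ [:: a2] ++ rep (3 * m - k) (U B).
Definition F (k : nat) : word := rep (2 * (3 * m - k)) (U B).

Definition bb : word := nseq (2 * B) b.
Definition trip : word := rep 3 ([:: a1] ++ nseq B b ++ [:: a2]).

Definition LoadS : word := e0 :: rep m (bb ++ [:: e]).
Definition DistS : word := e0 :: rep m (trip ++ [:: e]).
Definition VerS : word :=
  flatten [seq v (4 * k - 3) ++ D k ++ v (4 * k - 3)
             ++ v (4 * k - 2) ++ D k ++ v (4 * k - 2)
             ++ v (4 * k - 1) ++ E k ++ v (4 * k - 1)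
             ++ v (4 * k) ++ F k ++ v (4 * k) | k <- iota 1 (3 * m)].
Definition wS : word := LoadS ++ DistS ++ VerS.

End W.

(* The computation c (of length k) passes through
   u1u2u3 || x1x2x3 |-* u2u3z1 || x2x3 |-* u3z1z2 || x3, the first configuration
   being c j0 (or later): x2 is consumed by u2 (with resultant z2). *)
Definition consumed_after (c : nat -> config) (k j0 : nat)
    (u1 u2 u3 x1 x2 x3 : word) : Prop :=
  exists j1 j2 j3 (z1 z2 : word),
    [/\ j0 <= j1, j1 <= j2, j2 <= j3, j3 <= k &
     [/\ c j1 = (u1 ++ u2 ++ u3, x1 ++ x2 ++ x3),
         c j2 = (u2 ++ u3 ++ z1, x2 ++ x3) &
         c j3 = (u3 ++ z1 ++ z2, x3)]].

(* Main.v *)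
Require Import Defs.
From mathcomp Require Import all_boot.
From mathcomp Require Import zify.
Set Implicit Arguments. Unset Strict Implicit.

Lemma qstepP Q x c' : qstep (Q, x) c' ->
  exists s w, x = s :: w /\ (c' = (rcons Q s, w) \/ exists Q', Q = s :: Q' /\ c' = (Q', w)).
Proof. move=> H; inversion H; subst.
- by exists s, w; split => //; left.
- by exists s, w; split => //; right; exists Q0.
Qed.

Lemma first_pop c k : computation c k -> c k = ([::],[::]) ->
  forall j s Q x, j <= k -> c j = (s :: Q, x) ->
  exists p x', [/\ x = p ++ s :: x', j + size p < k,
    (forall t, t <= size p -> c (j + t) = (s :: Q ++ take t p, drop t p ++ s :: x')) &
    c (j + size p).+1 = (Q ++ p, x')].
Proof.
move=> Hc Hk j; move Hn: (k - j) => n; elim: n j Hn => [|n IH] j Hn s Q x Hjk Hcj.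
  have Ej : j = k by lia.
  by rewrite Ej Hk in Hcj.
have Hjk' : j < k by lia.
have := Hc j Hjk'; rewrite Hcj => /qstepP [s' [w [Ex [Hc1|[Q' [HQ Hc1]]]]]].
  have Hc1' : c j.+1 = (s :: rcons Q s', w) by rewrite Hc1.
  have [p [x' [Hw Hlt Hall Hlast]]] := IH j.+1 ltac:(lia) s (rcons Q s') w Hjk' Hc1'.
  exists (s' :: p), x'; split.
  - by rewrite Ex Hw.
  - rewrite /=; lia.
  - move=> [|t] Ht.
      by rewrite addn0 /= cats0 Hcj Ex Hw.
    rewrite addnS -addSn Hall /=; last by move: Ht => /=; lia.
    by rewrite cat_rcons.
  - by rewrite /= addnS -addSn Hlast cat_rcons.
case: HQ => Es EQ; subst s' Q'.
exists [::], w; split => //.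
- rewrite addn0; lia.
- move=> t; rewrite leqn0 => /eqP ->; by rewrite addn0 cats0 Hcj Ex.
- by rewrite addn0 cats0.
Qed.

Lemma pop_prefix c k : computation c k -> c k = ([::],[::]) ->
  forall u j Q x, j <= k -> c j = (u ++ Q, x) ->
  exists x1 x2 z, [/\ x = x1 ++ x2, j + size x1 <= k & c (j + size x1) = (Q ++ z, x2)].
Proof.
move=> Hc Hk; elim=> [|s u IH] j Q x Hjk Hcj.
  by exists [::], x, [::]; rewrite addn0 cats0.
have [p [x' [Hx Hlt _ Hc1]]] := first_pop Hc Hk Hjk Hcj.
rewrite -catA in Hc1.
have [x1 [x2 [z [Ex' Hle Hc2]]]] := IH _ _ _ Hlt Hc1.
exists (p ++ s :: x1), x2, (p ++ z); split.
- by rewrite Hx Ex' -catA.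
- rewrite size_cat /=; lia.
- have -> : j + size (p ++ s :: x1) = (j + size p).+1 + size x1 by rewrite size_cat /=; lia.
  by rewrite Hc2 catA.
Qed.

Lemma count_le c k (a : pred sym) : computation c k -> c k = ([::],[::]) ->
  forall j Q x, j <= k -> c j = (Q, x) -> count a Q <= count a x.
Proof.
move=> Hc Hk j; move Hn: (k - j) => n; elim: n j Hn => [|n IH] j Hn Q x Hjk Hcj.
  have Ej : j = k by lia.
  by rewrite Ej Hk in Hcj; case: Hcj => <- _.
have Hjk' : j < k by lia.
have := Hc j Hjk'; rewrite Hcj => /qstepP [s' [w [Ex [Hc1|[Q' [HQ Hc1]]]]]].
  have := IH j.+1 ltac:(lia) _ _ Hjk' Hc1.
  rewrite Ex -cats1 count_cat /=; lia.
have := IH j.+1 ltac:(lia) _ _ Hjk' Hc1.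
rewrite Ex HQ /=; lia.
Qed.

Lemma split_first (s : sym) T y A x' : count (pred1 s) T = 0 ->
  T ++ s :: y = A ++ s :: x' -> count (pred1 s) y <= count (pred1 s) x' -> A = T /\ x' = y.
Proof.
elim: T A => [|t T IH] [|a A] /=.
- by move=> _ [->].
- move=> _ [Ha Hy] Hc. rewrite Hy count_cat /= eqxx in Hc; lia.
- move=> H0 [Ht _]; rewrite Ht eqxx in H0; lia.
- move=> H0 [Ha Heq] Hc.
  have H0' : count (pred1 s) T = 0 by move: H0 => /eqP; rewrite addn_eq0 => /andP [_ /eqP].
  by have [-> ->] := IH A H0' Heq Hc; rewrite Ha.
Qed.

Lemma rep_S n (u : word) : rep n.+1 u = u ++ rep n u.
Proof. by []. Qed.

Lemma rep_add a b' (u : word) : rep (a + b') u = rep a u ++ rep b' u.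
Proof. elim: a => [|a IH] //=. by rewrite addSn !rep_S IH catA. Qed.

Lemma count_rep (a : pred sym) n u : count a (rep n u) = n * count a u.
Proof. elim: n => [|n IH] //. by rewrite rep_S count_cat IH mulSn. Qed.

Lemma count_X B : count (pred1 e) (bb B ++ [:: e]) = 1.
Proof. by rewrite count_cat count_nseq /= ?muln0 ?mul0n. Qed.

Lemma count_trip B : count (pred1 e) (trip B) = 0.
Proof. by rewrite /trip count_rep !count_cat count_nseq /= ?muln0 ?mul0n. Qed.

Lemma count_trip0 B : count (pred1 e0) (trip B) = 0.
Proof. by rewrite /trip count_rep !count_cat count_nseq /= ?muln0 ?mul0n. Qed.

Lemma count_X0 B : count (pred1 e0) (bb B ++ [:: e]) = 0.
Proof. by rewrite count_cat count_nseq /= ?muln0 ?mul0n. Qed.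

Lemma count_Ver (s : sym) S m B : s \in [:: e; e0] -> count (pred1 s) (VerS S m B) = 0.
Proof.
move=> Hs; rewrite /VerS.
elim: (iota 1 (3 * m)) => [|k0 l IH] //.
rewrite map_cons.
have -> : forall (h : word) t, flatten (h :: t) = h ++ flatten t by [].
rewrite count_cat IH addn0 /v /D /E /F /U !count_cat !count_rep !count_cat !count_nseq.
by move: Hs; rewrite !inE => /orP [] /eqP -> /=; rewrite ?muln0 ?mul0n.
Qed.

Lemma block c k : computation c k -> c k = ([::],[::]) ->
  forall (B n : nat) j Z V, j <= k -> count (pred1 e) V = 0 ->
  c j = (rep n.+1 (bb B ++ [:: e]) ++ Z, rep n.+1 (trip B ++ [:: e]) ++ V) ->
  exists z, [/\ j + size (trip B) < k,
    c (j + size (trip B)) = (e :: rep n (bb B ++ [:: e]) ++ Z ++ z, e :: rep n (trip B ++ [:: e]) ++ V) &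
    c (j + size (trip B)).+1 = (rep n (bb B ++ [:: e]) ++ Z ++ z, rep n (trip B ++ [:: e]) ++ V)].
Proof.
move=> Hc Hk B n j Z V Hjk HV Hcj.
have Hcj' : c j = (bb B ++ (e :: rep n (bb B ++ [:: e]) ++ Z),
   trip B ++ e :: (rep n (trip B ++ [:: e]) ++ V)).
  by rewrite Hcj !rep_S -!catA.
have [x1 [x2 [z [Ex Hle Hc2]]]] := pop_prefix Hc Hk Hjk Hcj'.
rewrite cat_cons in Hc2.
have [p [x' [Hx2 Hlt Hall Hlast]]] := first_pop Hc Hk Hle Hc2.
have Hcnt := count_le (pred1 e) Hc Hk Hlt Hlast.
have Eq : trip B ++ e :: (rep n (trip B ++ [:: e]) ++ V) = (x1 ++ p) ++ e :: x'.
  by rewrite Ex Hx2 catA.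
have [] := split_first (count_trip B) Eq.
  move: Hcnt; rewrite /bb !(count_cat, count_rep, count_trip, count_nseq, HV) /= ?mul0n; lia.
move=> Etrip Ex'.
have Es : size (trip B) = size x1 + size p by rewrite -Etrip size_cat.
exists (z ++ p); split.
- rewrite Es addnA; lia.
- rewrite Es addnA Hall // take_size drop_size cat0s Ex'.
  by rewrite -!catA.
- rewrite Es addnA Hlast Ex'. by rewrite -!catA.
Qed.

Lemma blocks c k B m V j1 : computation c k -> c k = ([::],[::]) ->
  count (pred1 e) V = 0 -> j1 <= k ->
  c j1 = (rep m (bb B ++ [:: e]), rep m (trip B ++ [:: e]) ++ V) ->
  forall i, i <= m -> exists Z, j1 + i * (size (trip B)).+1 <= k /\
    c (j1 + i * (size (trip B)).+1) = (rep (m - i) (bb B ++ [:: e]) ++ Z, rep (m - i) (trip B ++ [:: e]) ++ V).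
Proof.
move=> Hc Hk HV Hj1 Hc1; elim=> [|i IH] Hi.
  by exists [::]; rewrite mul0n addn0 subn0 cats0.
have [Z [Hle HcZ]] := IH (ltnW Hi).
have Em : m - i = (m - i.+1).+1 by lia.
rewrite Em in HcZ.
have [z [Hlt _ Hlast]] := block Hc Hk Hle HV HcZ.
exists (Z ++ z).
have -> : j1 + i.+1 * (size (trip B)).+1 = (j1 + i * (size (trip B)).+1 + size (trip B)).+1.
  rewrite mulSn; lia.
by split.
Qed.

Lemma mid_eq (h s : sym) (A T R W : word) :
  h :: ((A ++ (T ++ [:: s]) ++ R) ++ W) = (h :: A) ++ T ++ s :: R ++ W.
Proof. by rewrite -!catA. Qed.
Lemma mid_eq' (h s : sym) (A T R : word) :
  h :: (A ++ (T ++ [:: s]) ++ R) = (h :: A) ++ T ++ s :: R.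
Proof. by rewrite -!catA. Qed.
Lemma fr_eq (s : sym) (T R W : word) : ((T ++ [:: s]) ++ R) ++ W = T ++ (s :: R) ++ W.
Proof. by rewrite -!catA. Qed.

Unset Implicit Arguments.

Theorem lemma3 (S : seq nat) (m B : nat) :
  three_partition S m B ->
  forall (c : nat -> config) (k : nat),
    accepting (wS S m B) c k ->
    exists j0, j0 <= k /\
      c j0 = (LoadS m B, DistS m B ++ VerS S m B) /\
      forall i, 1 <= i <= m ->
        consumed_after c k j0
          (e0 :: rep i.-1 (bb B ++ [:: e]))
          (bb B)
          (e :: rep (m - i) (bb B ++ [:: e]))
          (e0 :: rep i.-1 (trip B ++ [:: e]))
          (trip B)
          (e :: rep (m - i) (trip B ++ [:: e]) ++ VerS S m B).
Proof.
move=> _ c k [Hc H0 Hk].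
set X := bb B ++ [:: e]; set Y := trip B ++ [:: e]; set V := VerS S m B.
have HV : count (pred1 e) V = 0 by apply: count_Ver; rewrite !inE eqxx.
have HV0 : count (pred1 e0) V = 0 by apply: count_Ver; rewrite !inE eqxx orbT.
have k0 : 0 < k.
  case: k Hk Hc => // Hk _; by rewrite H0 in Hk.
have := Hc 0 k0; rewrite H0 => /qstepP [s [w [Ew [Hc1|[Q' [HQ _]]]]]]; last by [].
case: Ew => Es Ew; subst s.
have Hc1' : c 1 = ([:: e0] , rep m X ++ e0 :: (rep m Y ++ V)) by rewrite Hc1 Ew.
have [p [x' [Hx Hlt Hall _]]] := first_pop Hc Hk k0 Hc1'.
have [] := split_first (s := e0) (T := rep m X) (y := rep m Y ++ V) _ Hx.
- by rewrite count_rep count_X0 muln0.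
- rewrite !(count_cat, count_rep, count_trip0, count_nseq, HV0) /= ?muln0 ?mul0n; lia.
move=> Ep Ex'.
set j0 := 1 + size p.
have Hc0 : c j0 = (LoadS m B, DistS m B ++ VerS S m B).
  by rewrite /j0 Hall // take_size drop_size /= Ex' Ep.
have Hj0 : j0 <= k by rewrite /j0; lia.
exists j0; split => //; split => //.
clearbody j0.
have Hc0' : c j0 = (e0 :: rep m X, e0 :: (rep m Y ++ V)) by rewrite Hc0.
have [p2 [x2 [Hx2 Hlt2 _ Hlast2]]] := first_pop Hc Hk Hj0 Hc0'.
have [] := split_first (s := e0) (T := [::]) (y := rep m Y ++ V) _ Hx2 => //.
  have := count_le (pred1 e0) Hc Hk Hlt2 Hlast2.
  rewrite !(count_cat, count_rep, count_trip0, count_nseq, HV0) /= ?muln0 ?mul0n; lia.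
move=> Ep2 Ex2; rewrite Ep2 /= addn0 cats0 Ex2 in Hlast2; rewrite Ep2 /= addn0 in Hlt2.
move=> i /andP [Hi1 Him].
have [Z [HleZ HcZ]] := blocks Hc Hk HV Hlt2 Hlast2 (leq_trans (leq_pred i) Him).
have Em : m - i.-1 = (m - i).+1 by lia.
rewrite Em in HcZ.
have [z [Hlt3 Hc3 _]] := block Hc Hk HleZ HV HcZ.
exists j0, (j0.+1 + i.-1 * (size (trip B)).+1), (j0.+1 + i.-1 * (size (trip B)).+1 + size (trip B)), Z, z.
set q := i.-1 * (size (trip B)).+1 in HleZ HcZ Hlt3 Hc3 *; clearbody q.
split.
- by [].
- lia.
- lia.
- lia.
split.
- have Hrep : forall u : word, rep m u = rep i.-1 u ++ u ++ rep (m - i) u.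
    move=> u; have Hm : m = i.-1 + (m - i).+1 by lia.
    by rewrite {1}Hm rep_add rep_S.
  by rewrite Hc0' !Hrep /X /Y mid_eq mid_eq'.
- by rewrite HcZ !rep_S /X /Y !fr_eq.
- by rewrite Hc3.
Qed.
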